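(* Let $G=(V,E)$ be a finite, connected, simple, undirected graph with no isolated vertices, let $\alpha\in(0,1)$, and let $S\subset V$ be nonempty with $\mathrm{vol}(S)\le\mathrm{vol}(V)/2$. Then $$h_{S,\alpha}\ \le\ \frac{1-\alpha}{\alpha}\,\frac{d_{\mathrm{avg}}(S)}{d_{\min}(S)}\,h_S.$$
   Context: $A$ is the adjacency matrix and $D$ the diagonal degree matrix. The personalized PageRank diffusion matrix is $R_\alpha=\sum_{k=0}^\infty\alpha(1-\alpha)^k(D^{-1}A)^k$. $\mathrm{vol}(S)=\sum_{v\in S}d_v$; $\partial S$ is the set of edges with exactly one endpoint in $S$; $h_S=|\partial S|/\mathrm{vol}(S)$; $h_{S,\alpha}=\frac{1}{|S|}\sum_{i\in S,\ j\in V\setminus S}(R_\alpha)_{ij}$; $d_{\mathrm{avg}}(S)=\mathrm{vol}(S)/|S|$ and $d_{\min}(S)=\min_{v\in S}d_v$. *)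

(* Defs.v *)
From HB Require Import structures.
From mathcomp Require Import all_boot all_order all_algebra.
From mathcomp Require Import all_classical all_reals.
From mathcomp Require Import topology normedtype sequences.
Set Implicit Arguments. Unset Strict Implicit. Unset Printing Implicit Defensive.
Import Order.TTheory GRing.Theory Num.Theory numFieldNormedType.Exports.
Local Open Scope ring_scope.

Section Graph.
Variable n : nat.
Variable e : rel 'I_n.+1.

Definition simple_graph : Prop := symmetric e /\ irreflexive e.
Definition connected_graph : Prop := forall x y : 'I_n.+1, connect e x y.
Definition deg (v : 'I_n.+1) : nat := #|[set u | e v u]|.
Definition no_isolated : Prop := forall v, (0 < deg v)%N.

Definition vol (S : {set 'I_n.+1}) : nat := \sum_(v in S) deg v.
(* |∂S| : edges with exactly one endpoint in S (each counted once, oriented out of S) *)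
Definition boundary_size (S : {set 'I_n.+1}) : nat :=
  #|[set p : 'I_n.+1 * 'I_n.+1 | [&& e p.1 p.2, p.1 \in S & p.2 \notin S]]|.
Definition dmin (S : {set 'I_n.+1}) : nat := \big[minn/n.+1]_(v in S) deg v.

Variable R : realType.
Definition adj : 'M[R]_n.+1 := \matrix_(i, j) (e i j)%:R.
Definition degmx : 'M[R]_n.+1 := diag_mx (\row_i (deg i)%:R).
Definition walkmx : 'M[R]_n.+1 := invmx degmx *m adj.
Definition ppr (alpha : R) (i j : 'I_n.+1) : R :=
  limn (series ((fun k => alpha * (1 - alpha) ^+ k * (walkmx ^+ k) i j) : R^nat)).

Definition hS (S : {set 'I_n.+1}) : R := (boundary_size S)%:R / (vol S)%:R.
Definition hSalpha (alpha : R) (S : {set 'I_n.+1}) : R :=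
  (#|S|%:R)^-1 * \sum_(i in S) \sum_(j in ~: S) ppr alpha i j.
Definition davg (S : {set 'I_n.+1}) : R := (vol S)%:R / (#|S|)%:R.
End Graph.

(* Main.v *)
Require Import Defs.
From HB Require Import structures.
From mathcomp Require Import all_boot all_order all_algebra.
From mathcomp Require Import all_classical all_reals.
From mathcomp Require Import topology normedtype sequences.
From mathcomp Require Import ring lra.
Import Order.TTheory GRing.Theory Num.Theory numFieldNormedType.Exports.
Local Open Scope ring_scope.

Section Walk.
Variable R : realType.
Variable n : nat.
Variable e : rel 'I_n.+1.
Hypothesis Hiso : no_isolated e.

Lemma degE i : (deg e i)%:R = \sum_l (e i l)%:R :> R.
Proof.
rewrite /deg -sum1_card natr_sum big_mkcond /=; apply: eq_bigr => l _.
by rewrite inE; case: (e i l).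
Qed.

Lemma deg_neq0 i : (deg e i)%:R != 0 :> R.
Proof. by rewrite pnatr_eq0 -lt0n Hiso. Qed.

Lemma walkE i j : walkmx e R i j = (e i j)%:R / (deg e i)%:R.
Proof.
have U : degmx e R \in unitmx.
  rewrite unitmxE det_diag unitfE; apply/prodf_neq0 => k _.
  by rewrite mxE deg_neq0.
have H : degmx e R *m walkmx e R = adj e R by rewrite /walkmx mulKVmx.
move: (walkmx e R) H => W H.
have := congr1 (fun M : 'M_n.+1 => M i j) H.
rewrite /degmx mul_diag_mx !mxE => <-.
by rewrite mulrC mulKf // deg_neq0.
Qed.

Lemma walk_ge0 i j : 0 <= walkmx e R i j.
Proof. by rewrite walkE divr_ge0 // ler0n. Qed.

Lemma walk_row i : \sum_l walkmx e R i l = 1.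
Proof.
under eq_bigr do rewrite walkE.
by rewrite -mulr_suml -degE mulfV // deg_neq0.
Qed.

Definition f (T : {set 'I_n.+1}) k i : R := \sum_(j in T) (walkmx e R ^+ k) i j.

Lemma fS T k i : f T k.+1 i = \sum_l walkmx e R i l * f T k l.
Proof.
rewrite /f exprS -mulmxE.
under eq_bigr do rewrite mxE.
rewrite exchange_big /=; apply: eq_bigr => l _.
by rewrite mulr_sumr.
Qed.

Lemma f0 T i : f T 0 i = (i \in T)%:R.
Proof.
rewrite /f expr0.
under eq_bigr do rewrite mxE.
rewrite (big_mkcond (fun j => j \in T)) (bigD1 i) //= big1 ?addr0 => [|j Hj].
  by rewrite eqxx; case: (i \in T).
by rewrite eq_sym (negbTE Hj); case: (j \in T).
Qed.

Lemma f_bounds T k i : 0 <= f T k i <= 1.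
Proof.
elim: k i => [|k IH] i.
  by rewrite f0; case: (i \in T) => /=; rewrite ?ler01 ?lexx.
rewrite fS; apply/andP; split.
  apply: sumr_ge0 => l _; apply: mulr_ge0; first exact: walk_ge0.
  by case/andP: (IH l).
rewrite -(walk_row i); apply: ler_sum => l _.
rewrite -[leRHS]mulr1; apply: ler_wpM2l; first exact: walk_ge0.
by case/andP: (IH l).
Qed.


Hypothesis Hsym : symmetric e.
Variable S : {set 'I_n.+1}.

Lemma boundE : (boundary_size e S)%:R = \sum_(i in S) \sum_(l | l \notin S) (e i l)%:R :> R.
Proof.
rewrite /boundary_size -sum1_card natr_sum.
rewrite pair_big_dep /= big_mkcond [RHS]big_mkcond /=.
apply: eq_bigr => p _; rewrite inE.
by case: (e p.1 p.2); case: (p.1 \in S); case: (p.2 \in S).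
Qed.

Lemma key k : \sum_(i in S) (deg e i)%:R * f (~: S) k i <= k%:R * (boundary_size e S)%:R.
Proof.
elim: k => [|k IH].
  rewrite mul0r; under eq_bigr do rewrite f0 inE.
  by rewrite big1 // => i ->; rewrite mulr0.
set B := (boundary_size e S)%:R in IH *.
have step : \sum_(i in S) (deg e i)%:R * f (~: S) k.+1 i <=
   \sum_(i in S) (deg e i)%:R * f (~: S) k i + B.
  have -> : \sum_(i in S) (deg e i)%:R * f (~: S) k.+1 i =
      \sum_(i in S) \sum_l (e i l)%:R * f (~: S) k l.
    apply: eq_bigr => i _; rewrite fS mulr_sumr; apply: eq_bigr => l _.
    by rewrite walkE mulrA mulrCA mulfV ?mulr1 // deg_neq0.
  have -> : \sum_(i in S) \sum_l (e i l)%:R * f (~: S) k l =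
     \sum_(i in S) \sum_(l in S) (e i l)%:R * f (~: S) k l +
     \sum_(i in S) \sum_(l | l \notin S) (e i l)%:R * f (~: S) k l.
    rewrite -big_split /=; apply: eq_bigr => i _.
    by rewrite (bigID (fun l => l \in S)).
  apply: lerD.
    rewrite exchange_big /=; apply: ler_sum => l lS.
    rewrite -mulr_suml; apply: ler_wpM2r; first by case/andP: (f_bounds (~: S) k l).
    rewrite degE; under eq_bigr do rewrite Hsym.
    rewrite [leRHS](bigID (fun i => i \in S)) /= lerDl.
    by apply: sumr_ge0 => *; rewrite ler0n.
  rewrite /B boundE; apply: ler_sum => i _; apply: ler_sum => l _.
  rewrite -[leRHS]mulr1; apply: ler_wpM2l; first by rewrite ler0n.
  by case/andP: (f_bounds (~: S) k l).
apply: (le_trans step); rewrite -natr1 mulrDl mul1r lerD2r //.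
Qed.
End Walk.
Local Open Scope classical_set_scope.
Section Ana.
Variable R : realType.

Lemma cvg_sumr (J : finType) (P : pred J) (g : J -> nat -> R) (l : J -> R) :
  (forall j, g j n @[n --> \oo] --> l j) ->
  (\sum_(j | P j) g j n) @[n --> \oo] --> \sum_(j | P j) l j.
Proof.
move=> H; rewrite unlock /=.
elim: (index_enum J) => [|a r IH] /=.
  exact: cvg_cst.
case: (P a) => //.
exact: (cvgD (H a) IH).
Qed.

Lemma geo (alpha : R) N : alpha * \sum_(0 <= k < N) (1 - alpha) ^+ k = 1 - (1 - alpha) ^+ N.
Proof.
elim: N => [|N IH]; first by rewrite big_geq // mulr0 expr0 subrr.
by rewrite big_nat_recr //= mulrDr IH exprSr; ring.
Qed.

Lemma arith (alpha : R) N : alpha ^+ 2 * \sum_(0 <= k < N) k%:R * (1 - alpha) ^+ k =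
  (1 - alpha) - (1 - alpha) ^+ N * (alpha * N%:R + (1 - alpha)).
Proof.
elim: N => [|N IH]; first by rewrite big_geq // mulr0 expr0 mul1r mulr0 add0r subrr.
by rewrite big_nat_recr //= mulrDr IH [(1 - alpha) ^+ N.+1]exprSr -natr1; ring.
Qed.
End Ana.

Lemma big_minn_le (I : eqType) (r : seq I) (P : pred I) (F : I -> nat) x0 i :
  i \in r -> P i -> (\big[minn/x0]_(j <- r | P j) F j <= F i)%N.
Proof.
elim: r => //= a r IH; rewrite inE big_cons => /orP [/eqP <- -> | H Pi].
  exact: geq_minl.
case: (P a); last exact: IH.
exact: leq_trans (geq_minr _ _) (IH H Pi).
Qed.

Theorem theorem6 (R : realType) (n : nat) (e : rel 'I_n.+1)
  (Hsimple : simple_graph e) (Hconn : connected_graph e) (Hiso : no_isolated e)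
  (alpha : R) (Ha0 : 0 < alpha) (Ha1 : alpha < 1)
  (S : {set 'I_n.+1}) (HS : (0 < #|S|)%N)
  (Hvol : ((vol e S)%:R : R) <= (vol e [set: 'I_n.+1])%:R / 2) :
  hSalpha e alpha S <=
    (1 - alpha) / alpha * (davg e R S / (dmin e S)%:R) * hS e R S.
Proof.
have Hsym : symmetric e by case: Hsimple.
set q := 1 - alpha.
have q0 : 0 <= q by rewrite /q subr_ge0 ltW.
set W := walkmx e R.
set B : R := (boundary_size e S)%:R.
set dm : R := (dmin e S)%:R.
have dmin_le i : i \in S -> (dmin e S <= deg e i)%N.
  by move=> iS; rewrite /dmin; apply: big_minn_le; rewrite ?mem_index_enum.
have dmin_gt0 : (0 < dmin e S)%N.
  rewrite /dmin; apply: (big_ind (fun x => 0 < x)%N) => //.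
  by move=> x y; rewrite leq_min => -> ->.
have dm0 : 0 < dm by rewrite /dm ltr0n.
have entry k i j : 0 <= (W ^+ k) i j <= 1.
  have := @f_bounds R n e Hiso [set j] k i.
  by rewrite /f big_set1.
have aq k : 0 <= alpha * q ^+ k by apply: mulr_ge0; [exact: ltW | exact: exprn_ge0].
set u := fun i j k => alpha * q ^+ k * (W ^+ k) i j.
have u0 i j k : 0 <= u i j k.
  rewrite /u; apply: mulr_ge0; last by case/andP: (entry k i j).
  exact: aq.
have Hc i j : cvgn (series (u i j)).
  apply: nondecreasing_is_cvgn.
    exact: (@nondecreasing_series _ _ predT 0%N (fun k _ _ => u0 i j k)).
  exists 1 => _ [N _ <-].
  apply: (@le_trans _ _ (alpha * \sum_(0 <= k < N) q ^+ k)).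
    rewrite /series /= mulr_sumr; apply: ler_sum => k _.
    rewrite /u -[leRHS]mulr1; apply: ler_wpM2l.
      exact: aq.
    by case/andP: (entry k i j).
  by rewrite geo gerBl exprn_ge0.
have Hf k : \sum_(i in S) f R n e (~: S) k i <= k%:R * B / dm.
  rewrite ler_pdivlMr // mulrC mulr_sumr.
  apply: le_trans (@key R n e Hiso Hsym S k); apply: ler_sum => i iS.
  apply: ler_wpM2r; first by case/andP: (@f_bounds R n e Hiso (~: S) k i).
  by rewrite ler_nat dmin_le.
set L := \sum_(i in S) \sum_(j in ~: S) ppr e alpha i j.
have HL : (\sum_(i in S) \sum_(j in ~: S) series (u i j) N) @[N --> \oo] --> L.
  apply: cvg_sumr => i; apply: cvg_sumr => j; exact: Hc.
have Lb : L <= B / dm * (q / alpha).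
  rewrite -(cvg_lim _ HL); last exact: Rhausdorff.
  apply: limr_le; first by apply/cvg_ex; exists L.
  apply: nearW => N.
  have -> : \sum_(i in S) \sum_(j in ~: S) series (u i j) N =
      \sum_(0 <= k < N) alpha * q ^+ k * \sum_(i in S) f R n e (~: S) k i.
    rewrite /series /=.
    under eq_bigr do rewrite exchange_big /=.
    rewrite exchange_big /=; apply: eq_bigr => k _.
    rewrite mulr_sumr; apply: eq_bigr => i _.
    by rewrite /f mulr_sumr.
  apply: (@le_trans _ _ (\sum_(0 <= k < N) alpha * q ^+ k * (k%:R * B / dm))).
    apply: ler_sum => k _; apply: ler_wpM2l; [exact: aq | exact: Hf].
  have -> : \sum_(0 <= k < N) alpha * q ^+ k * (k%:R * B / dm) =
     B / dm / alpha * (alpha ^+ 2 * \sum_(0 <= k < N) k%:R * q ^+ k).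
    rewrite mulr_sumr mulr_sumr; apply: eq_bigr => k _.
    by field; rewrite !gt_eqF.
  rewrite /q arith -/q.
  have -> : B / dm * (q / alpha) = B / dm / alpha * q by rewrite mulrA mulrAC.
  apply: ler_wpM2l.
    by rewrite !divr_ge0 ?ler0n // ltW.
  rewrite gerBl; apply: mulr_ge0; first exact: exprn_ge0.
  by apply: addr_ge0 => //; apply: mulr_ge0; [exact: ltW | exact: ler0n].
have [v vS] : exists v, v \in S by apply/card_gt0P.
have vol0 : 0 < ((vol e S)%:R : R).
  rewrite ltr0n /vol (bigD1 v) //=; apply: leq_trans (Hiso v) (leq_addr _ _).
have S0 : 0 < (#|S|%:R : R) by rewrite ltr0n.
rewrite /hSalpha -/L /hS /davg -/B -/dm.
apply: (@le_trans _ _ (#|S|%:R^-1 * (B / dm * (q / alpha)))).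
  by apply: ler_wpM2l; rewrite // invr_ge0 ltW.
rewrite le_eqVlt; apply/orP; left; apply/eqP.
by field; rewrite !gt_eqF.
Qed.
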